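(* Let $N\ge2$, $\mu>0$, $c>0$, $2+\frac4N<p<2^*$, and let $u\in S(c)$. Set $k_0=\frac{p\gamma_pNc^2}{2(p\gamma_p-2)}$ and $c_0=\big[\frac{p2^{p\gamma_p/2}}{\mu(p\gamma_p)^{(p\gamma_p+2)/2}}(\frac{p\gamma_p-2}{N})^{(p\gamma_p-2)/2}C(N,p)^{-p}\big]^{1/(p-2)}$. If $P(u)\le0$ and $\|\nabla u\|_2^2=k_0$, then $c\ge c_0$. Consequently, if $P(u)\le0$ and $c<c_0$, then $\|\nabla u\|_2^2\ne k_0$.
   Context: $\gamma_p=\frac{N(p-2)}{2p}$, $C(N,p)$ the best constant in $\|u\|_p\le C(N,p)\|\nabla u\|_2^{\gamma_p}\|u\|_2^{1-\gamma_p}$. $W=\{u\in H^1(\mathbb{R}^N):\int u^2|\log u^2|<\infty\}$, $S(c)=\{u\in W:\|u\|_2=c\}$, and $P(u)=\|\nabla u\|_2^2-\mu\gamma_p\|u\|_p^p-\frac N2c^2$. *)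

(* Defs.v *)
From HB Require Import structures.
From mathcomp Require Import all_boot all_order all_algebra.
From mathcomp Require Import all_classical all_reals all_analysis.
Set Implicit Arguments. Unset Strict Implicit. Unset Printing Implicit Defensive.
Import Order.TTheory GRing.Theory Num.Theory.
Import numFieldNormedType.Exports.
Local Open Scope classical_set_scope.
Local Open Scope ring_scope.

Section RN.
Variables (R : realType) (N : nat).
Local Notation RN := 'rV[R]_N.

Definition setcoord (x : RN) (i : 'I_N) (t : R) : RN :=
  \row_j (if j == i then t else x ord0 j).

Fixpoint iint (s : seq 'I_N) (F : RN -> \bar R) (x : RN) : \bar R :=
  match s with
  | [::] => F x
  | i :: s' => (\int[lebesgue_measure]_t iint s' F (setcoord x i t))%E
  end.

(* Lebesgue integral over R^N (via Fubini/Tonelli as iterated integrals) *)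
Definition intRN (F : RN -> \bar R) : \bar R := iint (enum 'I_N) F 0.

Definition borelRN : set (set RN) := smallest (sigma_algebra setT) open.
Definition borel_fun (u : RN -> R) : Prop :=
  forall O : set R, open O -> borelRN (u @^-1` O).

Definition ei (i : 'I_N) : RN := delta_mx 0 i.
Definition partial (i : 'I_N) (f : RN -> R) : RN -> R :=
  fun x => 'D_(ei i) f x.
Definition iter_partial (s : seq 'I_N) (f : RN -> R) : RN -> R :=
  foldr partial f s.

Definition test_fun (phi : RN -> R) : Prop :=
  (forall s : seq 'I_N, continuous (iter_partial s phi) /\
     forall (i : 'I_N) (x : RN), derivable (iter_partial s phi) x (ei i)) /\
  exists r : R, forall x : RN, r < `|x| -> phi x = 0.

Definition weak_grad (u : RN -> R) (g : 'I_N -> RN -> R) : Prop :=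
  forall (i : 'I_N) (phi : RN -> R), test_fun phi ->
    intRN (fun x => (u x * partial i phi x)%:E) =
    (- intRN (fun x => (g i x * phi x)%:E))%E.

Definition Lp_int (p : R) (u : RN -> R) : \bar R :=
  intRN (fun x => (`|u x| `^ p)%:E).

Definition H1 (u : RN -> R) (g : 'I_N -> RN -> R) : Prop :=
  borel_fun u /\ (Lp_int 2 u < +oo)%E /\ weak_grad u g /\
  forall i, borel_fun (g i) /\ (Lp_int 2 (g i) < +oo)%E.

Definition Lpnorm (p : R) (u : RN -> R) : R := fine (Lp_int p u) `^ p^-1.
Definition grad_sq (g : 'I_N -> RN -> R) : R :=
  \sum_(i < N) fine (Lp_int 2 (g i)).

Definition inW (u : RN -> R) (g : 'I_N -> RN -> R) : Prop :=
  H1 u g /\ (intRN (fun x => (u x ^+ 2 * `|ln (u x ^+ 2)|)%:E) < +oo)%E.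

Definition inS (c : R) (u : RN -> R) (g : 'I_N -> RN -> R) : Prop :=
  inW u g /\ Lpnorm 2 u = c.

Definition gamma_p (p : R) : R := N%:R * (p - 2) / (2 * p).

Definition GN_const (p : R) : R :=
  inf [set C : R | 0 <= C /\ forall u g, H1 u g ->
      Lpnorm p u <= C * (Num.sqrt (grad_sq g)) `^ gamma_p p
                      * Lpnorm 2 u `^ (1 - gamma_p p)].

Definition P_energy (mu p c : R) (u : RN -> R) (g : 'I_N -> RN -> R) : R :=
  grad_sq g - mu * gamma_p p * fine (Lp_int p u) - N%:R / 2 * c ^+ 2.

Definition crit_exp : \bar R :=
  if (2 < N)%N then (2 * N%:R / (N%:R - 2) : R)%:E else +oo%E.

Definition k0_val (p c : R) : R :=
  p * gamma_p p * N%:R * c ^+ 2 / (2 * (p * gamma_p p - 2)).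

Definition c0_val (mu p : R) : R :=
  (p * 2 `^ (p * gamma_p p / 2)
     / (mu * (p * gamma_p p) `^ ((p * gamma_p p + 2) / 2))
     * ((p * gamma_p p - 2) / N%:R) `^ ((p * gamma_p p - 2) / 2)
     * GN_const p `^ (- p)) `^ (p - 2)^-1.

End RN.

(* Main.v *)
Require Import Defs.
From HB Require Import structures.
From mathcomp Require Import all_boot all_order all_algebra.
From mathcomp Require Import all_classical all_reals all_analysis.
From mathcomp Require Import ring lra.
Import Order.TTheory GRing.Theory Num.Theory.
Local Open Scope ring_scope.

Theorem lemma4p1 (R : realType) (N : nat) (mu0 c p : R)
  (u : 'rV[R]_N -> R) (g : 'I_N -> 'rV[R]_N -> R) :
  (2 <= N)%N -> 0 < mu0 -> 0 < c ->
  2 + 4 / N%:R < p -> (p%:E < crit_exp R N)%E ->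
  inS c u g ->
  ((P_energy mu0 p c u g <= 0 -> grad_sq g = k0_val N p c -> c0_val N mu0 p <= c) /\
   (P_energy mu0 p c u g <= 0 -> c < c0_val N mu0 p -> grad_sq g <> k0_val N p c)).
Proof.
move=> N2 mu_pos c0 hp _ hS.
have Hmain : P_energy mu0 p c u g <= 0 -> grad_sq g = k0_val N p c -> c0_val N mu0 p <= c.
  move=> HP Hk.
  have Npos : (2 : R) <= N%:R by rewrite (ler_nat R 2 N).
  have N0 : 0 < (N%:R : R) by lra.
  have p2 : 2 < p.
    have : 0 < 4 / (N%:R : R) by apply: divr_gt0.
    lra.
  have p0 : 0 < p by lra.
  set q := p * gamma_p N p.
  have qE : q = N%:R * (p - 2) / 2.
    rewrite /q /gamma_p; field; lra.
  have q2 : 2 < q.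
    have : 4 < N%:R * (p - 2).
      have : 4 / N%:R * N%:R < (p - 2) * N%:R by rewrite ltr_pM2r //; lra.
      by rewrite divfK ?gt_eqF // mulrC.
    rewrite qE; lra.
  have gE : gamma_p N p = q / p by rewrite /q; field; lra.
  have gpos : 0 < gamma_p N p by rewrite gE divr_gt0 //; lra.
  have qdef : p * gamma_p N p = q by [].
  clearbody q.
  set k0 := k0_val N p c.
  have k0E : k0 = q * N%:R * c ^+ 2 / (2 * (q - 2)) by rewrite /k0 /k0_val qdef.
  have c2 : 0 < c ^+ 2 by apply: exprn_gt0.
  have k0def : k0_val N p c = k0 by [].
  clearbody k0.
  have k0pos : 0 < k0 by rewrite k0E; apply: divr_gt0; [apply: mulr_gt0; [apply: mulr_gt0|] | ]; lra.
  set A := fine (Lp_int p u).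
  have Adef : fine (Lp_int p u) = A by [].
  clearbody A.
  have HP' : N%:R * c ^+ 2 / (q - 2) <= mu0 * gamma_p N p * A.
    have : k0 - N%:R / 2 * c ^+ 2 = N%:R * c ^+ 2 / (q - 2).
      rewrite k0E; field; lra.
    move: HP; rewrite /P_energy Hk k0def Adef => HP E; rewrite -E; lra.
  have lhs0 : 0 < N%:R * c ^+ 2 / (q - 2) by apply: divr_gt0; [apply: mulr_gt0|]; lra.
  have Apos : 0 < A.
    have : 0 < mu0 * gamma_p N p * A by lra.
    by rewrite pmulr_rgt0 // mulr_gt0.
  set C := GN_const N p.
  pose E := [set C0 : R | 0 <= C0 /\ forall (u : 'rV[R]_N -> R) (g : 'I_N -> 'rV[R]_N -> R), H1 u g ->
      Lpnorm p u <= C0 * (Num.sqrt (grad_sq g)) `^ gamma_p N p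
                      * Lpnorm 2 u `^ (1 - gamma_p N p)]%classic.
  have CE : C = inf E by [].
  set S := Num.sqrt k0 `^ gamma_p N p.
  set T := c `^ (1 - gamma_p N p).
  have Spos : 0 < S by apply: powR_gt0; rewrite sqrtr_gt0.
  have Tpos : 0 < T by apply: powR_gt0.
  have HL2 : Lpnorm 2 u = c by case: hS.
  have H1u : H1 u g by case: hS => [[]].
  have c0zero : C = 0 -> c0_val N mu0 p <= c.
    move=> Cz; rewrite /c0_val -/C Cz powR0; last by rewrite oppr_eq0 gt_eqF.
    rewrite mulr0 powR0; first lra.
    rewrite invr_eq0; apply/eqP; lra.
  have [[x Ex]|E0] := pselect (exists x, E x); last first.
    apply: c0zero; rewrite CE inf_out // => -[[x Ex] _]; apply: E0; by exists x.
  have Cge0 : 0 <= C by rewrite CE; apply: lb_le_inf; [by exists x | by move=> y [] ].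
  set L := Lpnorm p u.
  have GN : L <= C * S * T.
    have : L / (S * T) <= C.
      rewrite CE; apply: lb_le_inf; first by exists x.
      move=> y [_ Hy]; have := Hy u g H1u; rewrite Hk k0def HL2 -/S -/T -/L => h.
      by rewrite ler_pdivrMr ?mulr_gt0 // mulrA.
    by rewrite ler_pdivrMr ?mulr_gt0 // mulrA.
  move: Cge0; rewrite le_eqVlt => /predU1P[Cz|Cpos]; first by apply: c0zero.
  have lnM' : forall x y : R, 0 < x -> 0 < y -> ln (x * y) = ln x + ln y.
    by move=> x1 y1 hx hy; rewrite lnM.
  have lnD' : forall x y : R, 0 < x -> 0 < y -> ln (x / y) = ln x - ln y.
    by move=> x1 y1 hx hy; rewrite lnM ?lnV // posrE invr_gt0.
  have Lpos : 0 < L by rewrite /L /Lpnorm Adef powR_gt0.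
  have h1 : ln A / p <= ln C + q / p * (2^-1 * ln k0) + (1 - q / p) * ln c.
    have : ln L <= ln (C * S * T) by rewrite ler_ln // posrE ?mulr_gt0.
    rewrite /L /Lpnorm Adef (ln_powR A) (lnM' (C * S) T) ?mulr_gt0 // (lnM' C S) //.
    rewrite /S /T !ln_powR -powR12_sqrt ?ln_powR; last lra.
    rewrite -gE => h; lra.
  have lnk0 : ln k0 = ln q + ln N%:R + ln c *+ 2 - (ln 2 + ln (q - 2)).
    rewrite k0E lnD' ?mulr_gt0 //; try lra.
    by rewrite !lnM' ?mulr_gt0 ?lnXn //; lra.
  have h2 : ln N%:R + ln c *+ 2 - ln (q - 2) <= ln mu0 + (ln q - ln p) + ln A.
    have : ln (N%:R * c ^+ 2 / (q - 2)) <= ln (mu0 * gamma_p N p * A).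
      by rewrite ler_ln ?posrE //; apply: mulr_gt0 => //; apply: mulr_gt0.
    rewrite lnD' ?mulr_gt0 //; last lra.
    rewrite (lnM' (mu0 * _) A) ?(lnM' mu0) ?(lnM' N%:R) //; try by apply: mulr_gt0.
    by rewrite lnXn // gE lnD' //; lra.
  have h1' : ln A <= p * ln C + q / 2 * ln k0 + (p - q) * ln c.
    move: h1; rewrite ler_pdivrMr //.
    have -> : (ln C + q / p * (2^-1 * ln k0) + (1 - q / p) * ln c) * p
      = p * ln C + q / 2 * ln k0 + (p - q) * ln c by field; lra.
    done.
  rewrite /c0_val qdef -/C.
  set X := (X in X `^ _ <= _).
  have Xpos : 0 < X.
    rewrite /X; repeat (first [apply: mulr_gt0 | rewrite invr_gt0 | apply: powR_gt0 | lra]).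
  have lnX : ln X = ln p + q/2 * ln 2 - (ln mu0 + (q+2)/2 * ln q)
      + (q-2)/2 * (ln (q-2) - ln N%:R) + (-p) * ln C.
    rewrite !lnM' ?lnV ?posrE; rewrite ?lnM' ?lnV ?ln_powR ?posrE; rewrite ?lnM' ?lnV ?posrE;
      repeat (first [apply: mulr_gt0 | rewrite invr_gt0 | apply: powR_gt0 | lra]).
  suff : ln (X `^ (p - 2)^-1) <= ln c by rewrite ler_ln ?posrE ?powR_gt0.
  rewrite ln_powR lnX mulrC ler_pdivrMr; last lra.
  rewrite lnk0 in h1'.
  lra.
split => //.
move=> HP hc Hk; have := Hmain HP Hk; lra.
Qed.
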